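(* Let Assumptions 1 and 2 hold and consider Algorithm 2 with $\eta\in(0,1/L_{\mathrm{avg}}]$. Let $\Delta_k=v_k-\nabla f(y_k)$, let $x_{k+1}$ be the $\epsilon_k$-optimal solution of the $k$-th subproblem, and let $u_k\in\mathbb{R}^d$ be any random vector that is independent of the mini-batch $\mathcal{B}_k$ given the past (i.e. determined by $\mathcal B_0,\dots,\mathcal B_{k-1}$). Then $$\mathbb{E}\langle\Delta_k,u_k-x_{k+1}\rangle\le\frac{3\eta}{2}\,\mathbb{E}\|\Delta_k\|_{H^{-1}}^2+\epsilon_k.$$
   Context: Setting. $F(x)=f(x)+h(x)$ on $\mathbb{R}^d$, where $f=\frac1n\sum_{i=1}^n f_i$ with each $f_i:\mathbb{R}^d\to\mathbb{R}$ convex and differentiable, and $h:\mathbb{R}^d\to\mathbb{R}\cup\{+\infty\}$ is proper, convex, lower semicontinuous, with closed domain $\mathrm{dom}\,h$. $H$ is a fixed symmetric positive definite $d\times d$ matrix; $\langle x,y\rangle_H=x^\top Hy$, $\|x\|_H=\sqrt{x^\top Hx}$, $\|x\|_{H^{-1}}=\sqrt{x^\top H^{-1}x}$, and $\langle x,y\rangle=x^\top y$. Assumption 1: each $f_i$ is $L_i$-smooth w.r.t. the $H$-norm, i.e. $\|\nabla f_i(x)-\nabla f_i(y)\|_{H^{-1}}\le L_i\|x-y\|_H$ for all $x,y$; $L_{\mathrm{avg}}=\frac1n\sum_{i=1}^nL_i$. Assumption 2: $f$ is $\mu$-strongly convex w.r.t. the $H$-norm for some $\mu>0$, i.e. $f(y)\ge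 f(x)+\langle\nabla f(x),y-x\rangle+\frac\mu2\|y-x\|_H^2$ for all $x,y$. Subproblem: for $y,v\in\mathbb{R}^d$ and $\eta>0$ let $q(x)=h(x)+\frac1{2\eta}\|x-y+\eta H^{-1}v\|_H^2$; a point $x^+$ is an $\epsilon$-optimal solution if $q(x^+)\le\min_x q(x)+\epsilon$. Algorithm 2 (one outer iteration $s$, given $\tilde x_s$ and parameters $\eta,\tau\in(0,1),\mu,b,T$ and tolerances $\epsilon_0,\dots,\epsilon_{T-1}\ge0$): compute $\nabla f(\tilde x_s)$; set $x_0=z_0=\tilde x_s$; for $k=0,\dots,T-1$: $y_k=\frac{1}{1+\tau}x_k+\frac{\tau}{1+\tau}z_k$; draw a mini-batch $\mathcal{B}_k$ of $b$ indices sampled independently (of each other and of the past) from $\{1,\dots,n\}$ with $\Pr(i)=p_i=L_i/(nL_{\mathrm{avg}})$; $v_k=\frac1b\sum_{i\in\mathcal B_k}\frac{\nabla f_i(y_k)-\nabla f_i(\tilde x_s)}{np_i}+\nabla f(\tilde x_s)$; let $x_{k+1}$ be an $\epsilon_k$-optimal solution of the subproblem with $y=y_k$, $v=v_k$; $g_{k+1}=(y_k-x_{k+1})/\eta$; $z_{k+1}=z_k+\tau(y_k-z_k)-\frac\tau\mu g_{k+1}$. Finally $\tilde x_{s+1}=x_T$. Expectations are over the mini-batch randomness. *)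

(* Defs.v *)
From Stdlib Require Import Reals.
From mathcomp Require Import ssreflect ssrfun ssrbool eqtype ssrnat seq choice.
From mathcomp Require Import fintype finfun bigop.
Set Implicit Arguments. Unset Strict Implicit.

Local Open Scope R_scope.

Definition vec (d : nat) := 'I_d -> R.
Definition mat (d : nat) := 'I_d -> 'I_d -> R.

Definition rsum (I : finType) (F : I -> R) : R := \big[Rplus/0]_(i : I) F i.
Definition rprod (I : finType) (F : I -> R) : R := \big[Rmult/1]_(i : I) F i.

Definition vadd d (x y : vec d) : vec d := fun i => x i + y i.
Definition vsub d (x y : vec d) : vec d := fun i => x i - y i.
Definition vscale d (a : R) (x : vec d) : vec d := fun i => a * x i.

Definition dot d (x y : vec d) : R := rsum (fun i => x i * y i).
Definition mv d (A : mat d) (x : vec d) : vec d := fun i => rsum (fun j => A i j * x j).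
Definition qform d (A : mat d) (x : vec d) : R := dot x (mv A x).
Definition anorm d (A : mat d) (x : vec d) : R := sqrt (qform A x).
(* Euclidean norm (used only for differentiability / topology) *)
Definition enorm d (x : vec d) : R := sqrt (dot x x).

Definition symmetric_mat d (A : mat d) : Prop := forall i j, A i j = A j i.
Definition pos_def d (A : mat d) : Prop :=
  forall x : vec d, (exists i, x i <> 0) -> 0 < qform A x.
Definition is_inverse d (A B : mat d) : Prop :=
  (forall i j, rsum (fun l => A i l * B l j) = if i == j then 1 else 0) /\
  (forall i j, rsum (fun l => B i l * A l j) = if i == j then 1 else 0).

Definition has_gradient d (F : vec d -> R) (G : vec d -> vec d) : Prop :=
  forall x eps, 0 < eps -> exists delta, 0 < delta /\
    forall hv : vec d, enorm hv < delta ->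
      Rabs (F (vadd x hv) - F x - dot (G x) hv) <= eps * enorm hv.

Definition convex_fun d (F : vec d -> R) : Prop :=
  forall x y t, 0 <= t <= 1 ->
    F (vadd (vscale t x) (vscale (1 - t) y)) <= t * F x + (1 - t) * F y.

(* Extended-valued h : R^d -> R u {+oo} is represented by a pair (h, domh):
   its value is h x when domh x holds, and +oo otherwise. *)
Definition proper_ext d (domh : vec d -> Prop) : Prop := exists x, domh x.
Definition convex_ext d (h : vec d -> R) (domh : vec d -> Prop) : Prop :=
  forall x y t, 0 <= t <= 1 -> domh x -> domh y ->
    domh (vadd (vscale t x) (vscale (1 - t) y)) /\
    h (vadd (vscale t x) (vscale (1 - t) y)) <= t * h x + (1 - t) * h y.
Definition lsc_ext d (h : vec d -> R) (domh : vec d -> Prop) : Prop :=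
  forall x,
    (domh x -> forall eps, 0 < eps -> exists delta, 0 < delta /\
       forall y, domh y -> enorm (vsub y x) < delta -> h x - eps < h y) /\
    (~ domh x -> forall M, exists delta, 0 < delta /\
       forall y, domh y -> enorm (vsub y x) < delta -> M < h y).
Definition closed_vset d (S : vec d -> Prop) : Prop :=
  forall x, ~ S x -> exists delta, 0 < delta /\
    forall y, enorm (vsub y x) < delta -> ~ S y.

Definition favg d n (f : 'I_n -> vec d -> R) (x : vec d) : R :=
  / INR n * rsum (fun i => f i x).
Definition gavg d n (g : 'I_n -> vec d -> vec d) (x : vec d) : vec d :=
  fun c => / INR n * rsum (fun i => g i x c).
Definition Lavg n (L : 'I_n -> R) : R := / INR n * rsum L.
Definition prob n (L : 'I_n -> R) (i : 'I_n) : R := L i / (INR n * Lavg L).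

Definition qsub d (H Hinv : mat d) (h : vec d -> R) (eta : R) (y v x : vec d) : R :=
  h x + / (2 * eta) * qform H (vadd (vsub x y) (vscale eta (mv Hinv v))).
(* x is an eps-optimal solution: q(x) <= min q + eps  (q = +oo off dom h) *)
Definition eps_optimal d (H Hinv : mat d) (h : vec d -> R) (domh : vec d -> Prop)
  (eta : R) (y v : vec d) (eps : R) (x : vec d) : Prop :=
  domh x /\ forall x', domh x' -> qsub H Hinv h eta y v x <= qsub H Hinv h eta y v x' + eps.

Definition batch n b := {ffun 'I_b -> 'I_n}.
(* probability of drawing the (ordered, independent) mini-batch B *)
Definition batch_prob n b (L : 'I_n -> R) (B : batch n b) : R :=
  rprod (fun l : 'I_b => prob L (B l)).

Definition Eb n b (L : 'I_n -> R) (F : batch n b -> R) : R :=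
  rsum (fun B : batch n b => batch_prob L B * F B).
(* Histories are lists of mini-batches, MOST RECENT FIRST:
   [:: B_{m-1}; ...; B_0].  Ehist m F = expectation of F over B_0..B_{m-1}. *)
Fixpoint Ehist n b (L : 'I_n -> R) (m : nat) (F : seq (batch n b) -> R) : R :=
  match m with
  | O => F [::]
  | m'.+1 => Ehist L m' (fun hs => Eb L (fun B => F (B :: hs)))
  end.

Definition vest d n b (g : 'I_n -> vec d -> vec d) (L : 'I_n -> R)
  (xt y : vec d) (B : batch n b) : vec d :=
  fun c => / INR b * rsum (fun l : 'I_b =>
              (g (B l) y c - g (B l) xt c) / (INR n * prob L (B l)))
           + gavg g xt c.

(* Algorithm 2 (one outer iteration from xt).  S hs is the inexact subproblem
   solution x_{j+1} chosen after the history hs = [:: B_j; ...; B_0].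
   state hs = (x_j, z_j) with j = size hs. *)
Fixpoint state d n b (eta tau mu : R) (g : 'I_n -> vec d -> vec d)
  (L : 'I_n -> R) (xt : vec d) (S : seq (batch n b) -> vec d)
  (hs : seq (batch n b)) : vec d * vec d :=
  match hs with
  | [::] => (xt, xt)
  | B :: hs' =>
      let (x, z) := state eta tau mu g L xt S hs' in
      let y := vadd (vscale (/ (1 + tau)) x) (vscale (tau / (1 + tau)) z) in
      let x' := S hs in
      let gg := vscale (/ eta) (vsub y x') in
      (x', vsub (vadd z (vscale tau (vsub y z))) (vscale (tau / mu) gg))
  end.

Definition ystep d n b (eta tau mu : R) (g : 'I_n -> vec d -> vec d)
  (L : 'I_n -> R) (xt : vec d) (S : seq (batch n b) -> vec d)
  (hs : seq (batch n b)) : vec d :=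
  let (x, z) := state eta tau mu g L xt S hs in
  vadd (vscale (/ (1 + tau)) x) (vscale (tau / (1 + tau)) z).

(* v_j for a history hs = B_j :: hs' (hs' of length j) *)
Definition vstep d n b (eta tau mu : R) (g : 'I_n -> vec d -> vec d)
  (L : 'I_n -> R) (xt : vec d) (S : seq (batch n b) -> vec d)
  (hs : seq (batch n b)) : vec d :=
  match hs with
  | [::] => fun _ => 0
  | B :: hs' => vest g L xt (ystep eta tau mu g L xt S hs') B
  end.

Definition delta_step d n b (eta tau mu : R) (g : 'I_n -> vec d -> vec d)
  (L : 'I_n -> R) (xt : vec d) (S : seq (batch n b) -> vec d)
  (hs : seq (batch n b)) : vec d :=
  vsub (vstep eta tau mu g L xt S hs) (gavg g (ystep eta tau mu g L xt S (behead hs))).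

(* Main.v *)
Require Import Defs.
From Stdlib Require Import Reals Lra Psatz Classical FunctionalExtensionality.
From HB Require Import structures.
From mathcomp Require Import ssreflect ssrfun ssrbool eqtype ssrnat seq choice.
From mathcomp Require Import fintype finfun bigop.
Set Implicit Arguments. Unset Strict Implicit.

Lemma Rplus_assoc' : associative Rplus. Proof. by move=> x y z; rewrite Rplus_assoc. Qed.
Lemma Rmult_assoc' : associative Rmult. Proof. by move=> x y z; rewrite Rmult_assoc. Qed.
HB.instance Definition _ := Monoid.isComLaw.Build R 0%R Rplus Rplus_assoc' Rplus_comm Rplus_0_l.
HB.instance Definition _ := Monoid.isComLaw.Build R 1%R Rmult Rmult_assoc' Rmult_comm Rmult_1_l.
HB.instance Definition _ := Monoid.isMulLaw.Build R 0%R Rmult Rmult_0_l Rmult_0_r.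
HB.instance Definition _ := Monoid.isAddLaw.Build R Rmult Rplus Rmult_plus_distr_r Rmult_plus_distr_l.

Section Helpers.
Local Open Scope R_scope.

Lemma rsum_split (I : finType) (F G : I -> R) :
  rsum (fun i => F i + G i) = rsum F + rsum G.
Proof. by rewrite /rsum big_split. Qed.

Lemma rsum_scal (I : finType) (a : R) (F : I -> R) :
  rsum (fun i => a * F i) = a * rsum F.
Proof. by rewrite /rsum big_distrr. Qed.

Lemma rsum_ext (I : finType) (F G : I -> R) :
  (forall i, F i = G i) -> rsum F = rsum G.
Proof. by move=> h; rewrite /rsum; apply: eq_bigr => i _. Qed.

Lemma rsum0 (I : finType) : rsum (fun _ : I => 0) = 0.
Proof. by rewrite /rsum big1. Qed.

Lemma rsum_le (I : finType) (F G : I -> R) :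
  (forall i, F i <= G i) -> rsum F <= rsum G.
Proof.
move=> h; rewrite /rsum; elim/big_ind2: _ => //; first lra.
move=> *; lra.
Qed.

Lemma rsum_ge0 (I : finType) (F : I -> R) :
  (forall i, 0 <= F i) -> 0 <= rsum F.
Proof. move=> h; rewrite -(rsum0 I); exact: rsum_le. Qed.

Lemma rsum_swap (I J : finType) (F : I -> J -> R) :
  rsum (fun i => rsum (fun j => F i j)) = rsum (fun j => rsum (fun i => F i j)).
Proof. by rewrite /rsum exchange_big. Qed.

Lemma rprod_ge0 (I : finType) (F : I -> R) :
  (forall i, 0 <= F i) -> 0 <= rprod F.
Proof.
move=> h; rewrite /rprod; elim/big_ind: _ => //; first lra.
move=> *; exact: Rmult_le_pos.
Qed.


Section Vec.
Variable d : nat.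
Implicit Types x y z : vec d.

Lemma dot_add_l x y z : dot (vadd x y) z = dot x z + dot y z.
Proof. rewrite /dot /vadd -rsum_split; apply: rsum_ext => i; ring. Qed.
Lemma dot_scale_l a x z : dot (vscale a x) z = a * dot x z.
Proof. rewrite /dot /vscale -rsum_scal; apply: rsum_ext => i; ring. Qed.
Lemma vsub_eq x y : vsub x y = vadd x (vscale (-1) y).
Proof. apply: functional_extensionality => i; rewrite /vsub /vadd /vscale; ring. Qed.
Lemma dot_sub_l x y z : dot (vsub x y) z = dot x z - dot y z.
Proof. rewrite vsub_eq dot_add_l dot_scale_l; ring. Qed.
Lemma dot_comm x y : dot x y = dot y x.
Proof. rewrite /dot; apply: rsum_ext => i; ring. Qed.
Lemma dot_add_r x y z : dot z (vadd x y) = dot z x + dot z y.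
Proof. by rewrite dot_comm dot_add_l !(dot_comm z). Qed.
Lemma dot_sub_r x y z : dot z (vsub x y) = dot z x - dot z y.
Proof. by rewrite dot_comm dot_sub_l !(dot_comm z). Qed.
Lemma dot_scale_r a x z : dot z (vscale a x) = a * dot z x.
Proof. by rewrite dot_comm dot_scale_l !(dot_comm z). Qed.

Lemma mv_add (A : mat d) x y : mv A (vadd x y) = vadd (mv A x) (mv A y).
Proof.
apply: functional_extensionality => i; rewrite /mv /vadd -rsum_split.
apply: rsum_ext => j; ring.
Qed.
Lemma mv_scale (A : mat d) a x : mv A (vscale a x) = vscale a (mv A x).
Proof.
apply: functional_extensionality => i; rewrite /mv /vscale -rsum_scal.
apply: rsum_ext => j; ring.
Qed.
Lemma mv_sub (A : mat d) x y : mv A (vsub x y) = vsub (mv A x) (mv A y).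
Proof. by rewrite !vsub_eq mv_add mv_scale. Qed.

Lemma dot_mv_sym (A : mat d) x y : symmetric_mat A -> dot x (mv A y) = dot y (mv A x).
Proof.
move=> hA; rewrite /dot /mv.
transitivity (rsum (fun i => rsum (fun j => x i * A i j * y j))).
  by apply: rsum_ext => i; rewrite -rsum_scal; apply: rsum_ext => j; ring.
rewrite rsum_swap; apply: rsum_ext => j; rewrite -rsum_scal; apply: rsum_ext => i.
rewrite (hA i j); ring.
Qed.

Lemma dot_mv_swap (A : mat d) x : dot (mv A x) x = dot x (mv A x).
Proof. by rewrite dot_comm. Qed.

Lemma mv_inv (H Hinv : mat d) v : is_inverse H Hinv -> mv H (mv Hinv v) = v.
Proof.
move=> [h1 _]; apply: functional_extensionality => i; rewrite /mv.
transitivity (rsum (fun l => rsum (fun j => H i j * Hinv j l) * v l)).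
  transitivity (rsum (fun j => rsum (fun l => H i j * Hinv j l * v l))).
    by apply: rsum_ext => j; rewrite -rsum_scal; apply: rsum_ext => l; ring.
  rewrite rsum_swap; apply: rsum_ext => l; rewrite Rmult_comm -rsum_scal.
  by apply: rsum_ext => j; ring.
transitivity (rsum (fun l => if l == i then v i else 0)).
  apply: rsum_ext => l; rewrite h1; case: (eqVneq l i) => [->|ne].
    by rewrite ?eqxx /=; ring.
  by rewrite ?(eq_sym i l) ?(negbTE ne) /=; ring.
by rewrite /rsum -big_mkcond /= big_pred1_eq.
Qed.

Lemma qform_add (H : mat d) x y : symmetric_mat H ->
  qform H (vadd x y) = qform H x + 2 * dot x (mv H y) + qform H y.
Proof.
move=> hs; rewrite /qform mv_add !dot_add_l !dot_add_r (@dot_mv_sym H y x hs); ring.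
Qed.
Lemma qform_sub (H : mat d) x y : symmetric_mat H ->
  qform H (vsub x y) = qform H x - 2 * dot x (mv H y) + qform H y.
Proof.
move=> hs; rewrite /qform mv_sub !dot_sub_l !dot_sub_r (@dot_mv_sym H y x hs); ring.
Qed.
Lemma qform_scale (H : mat d) a x : qform H (vscale a x) = a * a * qform H x.
Proof. rewrite /qform mv_scale dot_scale_l dot_scale_r; ring. Qed.

Lemma qform_ge0 (H : mat d) x : pos_def H -> 0 <= qform H x.
Proof.
move=> hp; case: (classic (exists i, x i <> 0)) => [e|ne].
  by apply: Rlt_le; apply: hp.
have x0 : forall i, x i = 0.
  by move=> i; apply: NNPP => hi; apply: ne; exists i.
rewrite /qform /dot (rsum_ext (G := fun _ => 0)); first by rewrite rsum0; lra.
by move=> i; rewrite x0; ring.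
Qed.

End Vec.
End Helpers.


Section Geo.
Local Open Scope R_scope.
Variable d : nat.
Variables H Hinv : mat d.
Hypothesis Hsym : symmetric_mat H.
Hypothesis Hpd : pos_def H.
Hypothesis Hinvh : is_inverse H Hinv.

Lemma qsub_expand (h : vec d -> R) eta y v x : eta <> 0 ->
  qsub H Hinv h eta y v x = h x + / (2 * eta) * qform H (vsub x y)
     + dot (vsub x y) v + eta / 2 * qform H (mv Hinv v).
Proof.
move=> he; rewrite /qsub qform_add // mv_scale (mv_inv _ Hinvh) dot_scale_r qform_scale.
field; auto.
Qed.

Lemma qsub_strong (h : vec d -> R) (domh : vec d -> Prop) eta y v x z s :
  0 < eta -> convex_ext h domh -> domh x -> domh z -> 0 <= s <= 1 ->
  domh (vadd (vscale s x) (vscale (1 - s) z)) /\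
  qsub H Hinv h eta y v (vadd (vscale s x) (vscale (1 - s) z)) <=
  s * qsub H Hinv h eta y v x + (1 - s) * qsub H Hinv h eta y v z
   - s * (1 - s) / (2 * eta) * qform H (vsub x z).
Proof.
move=> he hc dx dz hs; have [dm hm] := hc x z s hs dx dz.
split => //.
have e1 : vsub (vadd (vscale s x) (vscale (1 - s) z)) y =
          vadd (vscale s (vsub x y)) (vscale (1 - s) (vsub z y)).
  by apply: functional_extensionality => i; rewrite /vsub /vadd /vscale; ring.
have e2 : vsub x z = vsub (vsub x y) (vsub z y).
  by apply: functional_extensionality => i; rewrite /vsub /vadd /vscale; ring.
have hne : eta <> 0 by lra.
rewrite !qsub_expand // e1 e2 (@qform_sub d H (vsub x y) (vsub z y) Hsym) qform_add // !qform_scale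
  mv_scale !dot_scale_l !dot_scale_r dot_add_l !dot_scale_l.
set A := qform H (vsub x y); set B := qform H (vsub z y).
set C := dot (vsub x y) (mv H (vsub z y)).
set K := qform H (mv Hinv v).
set hm' := h _.
have E : s * (h x + / (2 * eta) * A + dot (vsub x y) v + eta / 2 * K) +
  (1 - s) * (h z + / (2 * eta) * B + dot (vsub z y) v + eta / 2 * K) -
  s * (1 - s) / (2 * eta) * (A - 2 * C + B) -
  (hm' + / (2 * eta) * (s * s * A + 2 * (s * ((1 - s) * C)) + (1 - s) * (1 - s) * B) +
   (s * dot (vsub x y) v + (1 - s) * dot (vsub z y) v) + eta / 2 * K)
  = s * h x + (1 - s) * h z - hm'.
  by field.
apply: Rge_le; apply: Rminus_ge; rewrite E /hm'; clear E e1 e2; lra.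
Qed.

Lemma cauchy_schwarz (w D : vec d) lam :
  2 * lam * dot D w <= qform H w + lam * lam * qform Hinv D.
Proof.
have h0 := qform_ge0 (vsub w (vscale lam (mv Hinv D))) Hpd.
rewrite qform_sub // qform_scale mv_scale (mv_inv _ Hinvh) dot_scale_r in h0.
have e : qform H (mv Hinv D) = qform Hinv D.
  by rewrite /qform (mv_inv _ Hinvh) dot_comm.
rewrite e (dot_comm w D) in h0; lra.
Qed.

Lemma zero_of_anorm (z : vec d) : anorm Hinv z <= 0 -> forall c, z c = 0.
Proof.
move=> hz.
have hq : qform Hinv z <= 0.
  case: (Rle_lt_dec (qform Hinv z) 0) => // hp.
  have := sqrt_lt_R0 _ hp; rewrite /anorm in hz; lra.
have e : qform H (mv Hinv z) = qform Hinv z.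
  by rewrite /qform (mv_inv _ Hinvh) dot_comm.
have z0 : forall i, mv Hinv z i = 0.
  move=> i; apply: NNPP => hi.
  have := Hpd (ex_intro _ i hi); lra.
move=> c; rewrite -(mv_inv z Hinvh).
have -> : mv Hinv z = (fun _ => 0) by apply: functional_extensionality.
rewrite /mv (rsum_ext (G := fun _ => 0)) ?rsum0 // => j; ring.
Qed.

End Geo.


Section Prob.
Local Open Scope R_scope.
Variables n b : nat.
Variable L : 'I_n -> R.
Hypothesis Lpos : forall i, 0 <= L i.
Hypothesis Lavgpos : 0 < Lavg L.
Hypothesis npos : (0 < n)%N.

Lemma nLavg : INR n * Lavg L = rsum L.
Proof.
rewrite /Lavg; have : INR n <> 0 by apply: not_0_INR; apply/eqP; rewrite -lt0n.
move=> h; field; auto.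
Qed.

Lemma prob_ge0 i : 0 <= prob L i.
Proof.
rewrite /prob nLavg; have : 0 < rsum L by rewrite -nLavg; apply: Rmult_lt_0_compat => //;
  apply: lt_0_INR; apply/ltP.
move=> h; apply: Rmult_le_pos => //; apply: Rlt_le; exact: Rinv_0_lt_compat.
Qed.

Lemma prob_sum : rsum (prob L) = 1.
Proof.
have h : 0 < rsum L by rewrite -nLavg; apply: Rmult_lt_0_compat => //;
  apply: lt_0_INR; apply/ltP.
rewrite /prob nLavg /Rdiv.
rewrite (rsum_ext (G := fun i => / rsum L * L i)); last by move=> i; ring.
rewrite rsum_scal; field; lra.
Qed.

Lemma batch_prob_ge0 (B : batch n b) : 0 <= batch_prob L B.
Proof. apply: rprod_ge0 => l; exact: prob_ge0. Qed.

Lemma batch_marg (F : 'I_b -> 'I_n -> R) :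
  rsum (fun B : batch n b => rprod (fun l => F l (B l))) =
  rprod (fun l => rsum (fun j => F l j)).
Proof. by rewrite /rsum /rprod bigA_distr_bigA. Qed.

Lemma batch_sum : rsum (fun B : batch n b => batch_prob L B) = 1.
Proof.
rewrite /batch_prob (batch_marg (fun _ j => prob L j)).
rewrite /rprod (eq_bigr (fun _ => 1)); last by move=> l _; exact: prob_sum.
by rewrite big1.
Qed.

Lemma batch_one (l0 : 'I_b) (a : 'I_n -> R) :
  rsum (fun B : batch n b => batch_prob L B * a (B l0)) =
  rsum (fun j => prob L j * a j).
Proof.
pose F (l : 'I_b) (j : 'I_n) := prob L j * (if l == l0 then a j else 1).
transitivity (rsum (fun B : batch n b => rprod (fun l => F l (B l)))).
  apply: rsum_ext => B; rewrite /batch_prob /rprod /F [in RHS]big_split /=.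
  have -> : \big[Rmult/1]_(i < b) (if i == l0 then a (B i) else 1) = a (B l0).
    rewrite (bigD1 l0) //= eqxx big1 ?Rmult_1_r //.
    by move=> l /negbTE ->.
  by [].
rewrite batch_marg /rprod (bigD1 l0) //= big1 ?Rmult_1_r.
  by rewrite /F; apply: rsum_ext => j; rewrite eqxx.
move=> l /negbTE hl; rewrite /F hl (rsum_ext (G := prob L)) ?prob_sum // => j; ring.
Qed.

Lemma Eb_const c : Eb L (fun _ : batch n b => c) = c.
Proof.
rewrite /Eb (rsum_ext (G := fun B => c * batch_prob L B)); last by move=> B; ring.
by rewrite rsum_scal batch_sum; ring.
Qed.

Lemma Eb_lin a (F G : batch n b -> R) :
  Eb L (fun B => a * F B + G B) = a * Eb L F + Eb L G.
Proof.
rewrite /Eb -rsum_scal -rsum_split; apply: rsum_ext => B; ring.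
Qed.

Lemma Eb_le (F G : batch n b -> R) : (forall B, F B <= G B) -> Eb L F <= Eb L G.
Proof.
move=> h; apply: rsum_le => B; apply: Rmult_le_compat_l => //; exact: batch_prob_ge0.
Qed.

Lemma Ehist_le m (F G : seq (batch n b) -> R) :
  (forall hs, size hs = m -> F hs <= G hs) -> Ehist L m F <= Ehist L m G.
Proof.
elim: m F G => [|m IH] F G h /=; first exact: h.
apply: IH => hs hs_m; apply: Eb_le => B; apply: h => /=; by rewrite hs_m.
Qed.

Lemma Ehist_lin m a c (F : seq (batch n b) -> R) :
  Ehist L m (fun hs => a * F hs + c) = a * Ehist L m F + c.
Proof.
elim: m F => [|m IH] F //=.
rewrite -IH; congr (Ehist L m _); apply: functional_extensionality => hs.
by rewrite -(Eb_const c) -Eb_lin Eb_const.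
Qed.

End Prob.

Section SPart4.
Local Open Scope R_scope.


Lemma rsum_const (m : nat) (c : R) : rsum (fun _ : 'I_m => c) = INR m * c.
Proof.
rewrite /rsum big_const_ord; elim: m => [|m IH] /=; first ring.
rewrite IH; case: m {IH} => [|m] /=; ring.
Qed.

Section Unb.
Variables (d n b : nat) (H Hinv : mat d) (g : 'I_n -> vec d -> vec d) (L : 'I_n -> R).
Hypothesis Hsym : symmetric_mat H.
Hypothesis Hpd : pos_def H.
Hypothesis Hinvh : is_inverse H Hinv.
Hypothesis Lpos : forall i, 0 <= L i.
Hypothesis Lavgpos : 0 < Lavg L.
Hypothesis npos : (0 < n)%N.
Hypothesis bpos : (0 < b)%N.
Hypothesis Lip : forall i x y, anorm Hinv (vsub (g i x) (g i y)) <= L i * anorm H (vsub x y).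

Lemma unbiased (xt y : vec d) c :
  Eb L (fun B : batch n b => vest g L xt y B c) = gavg g y c.
Proof.
have nR : INR n <> 0 by apply: not_0_INR; apply/eqP; rewrite -lt0n.
have bR : INR b <> 0 by apply: not_0_INR; apply/eqP; rewrite -lt0n.
rewrite /vest (Eb_lin L) (Eb_const b Lavgpos npos).
set a := fun j : 'I_n => (g j y c - g j xt c) / (INR n * prob L j).
have e1 : Eb L (fun B : batch n b => rsum (fun l : 'I_b => a (B l))) =
          INR b * rsum (fun j => prob L j * a j).
  rewrite /Eb.
  rewrite (rsum_ext (G := fun B : batch n b => rsum (fun l => batch_prob L B * a (B l))));
    last by move=> B; rewrite rsum_scal.
  rewrite rsum_swap (rsum_ext (G := fun _ => rsum (fun j => prob L j * a j))).
    by rewrite rsum_const.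
  by move=> l; rewrite (batch_one Lavgpos npos).
rewrite e1.
have e2 : rsum (fun j => prob L j * a j) = / INR n * rsum (fun j => g j y c - g j xt c).
  rewrite -rsum_scal; apply: rsum_ext => j; rewrite /a.
  case: (Req_dec (prob L j) 0) => hp.
    have hL : L j = 0.
      move: hp; rewrite /prob (nLavg L npos).
      have : 0 < rsum L by rewrite -(nLavg L npos); apply: Rmult_lt_0_compat => //;
        apply: lt_0_INR; apply/ltP.
      move=> hs hp; have := Rmult_integral _ _ hp; case => // hi.
      have := Rinv_neq_0_compat _ (Rgt_not_eq _ _ hs); contradiction.
    have hz := Lip j y xt; rewrite hL Rmult_0_l in hz.
    have := zero_of_anorm Hpd Hinvh hz c; rewrite /vsub => ->; rewrite hp; ring.
  field; split => //.
rewrite e2 /gavg.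
rewrite (rsum_ext (F := fun j => g j y c - g j xt c) (G := fun j => g j y c + -1 * g j xt c));
  last by move=> j; ring.
rewrite rsum_split rsum_scal; field; auto.
Qed.

Lemma delta_zero_mean (xt y z : vec d) :
  Eb L (fun B : batch n b => dot (vsub (vest g L xt y B) (gavg g y)) z) = 0.
Proof.
rewrite /Eb.
rewrite (rsum_ext (G := fun B : batch n b => rsum (fun c =>
     batch_prob L B * ((vest g L xt y B c - gavg g y c) * z c))));
  last by move=> B; rewrite /dot /vsub rsum_scal.
rewrite rsum_swap (rsum_ext (G := fun _ => 0)) ?rsum0 // => c.
transitivity (Eb L (fun B : batch n b => z c * vest g L xt y B c + (- (z c * gavg g y c)))).
  by rewrite /Eb; apply: rsum_ext => B; ring.
rewrite (Eb_lin L) (Eb_const b Lavgpos npos) unbiased; ring.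
Qed.

End Unb.

End SPart4.

Section SPart5.
Local Unset Implicit Arguments.
Local Open Scope R_scope.

Lemma core_real e E N P D2 :
  0 < e -> 0 < E -> 0 <= N -> 0 <= D2 ->
  (forall s, 0 < s <= 1 -> s * P >= s * (2 - s) * D2 / (2 * e) - E) ->
  (forall lam, 2 * lam * P <= D2 + lam * lam * N) ->
  P <= 3 / 2 * e * N + E.
Proof.
move=> he hE hN hD H1 CS.
destruct (Rle_lt_dec P 0) as [hP|hP]; first nra.
destruct (Req_dec N 0) as [N0|Nne].
  have := CS ((D2 + 1) / (2 * P)).
  rewrite N0; have -> : 2 * ((D2 + 1) / (2 * P)) * P = D2 + 1 by field; lra.
  lra.
have Npos : 0 < N by lra.
have PP : P * P <= N * D2.
  have := CS (P / N).
  have -> : 2 * (P / N) * P = 2 * (P * P) / N by field.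
  have -> : P / N * (P / N) * N = (P * P) / N by field.
  move=> h.
  have h2 : (P * P) / N <= D2 by lra.
  have := Rmult_le_compat_l N _ _ (Rlt_le _ _ Npos) h2.
  have -> : N * (P * P / N) = P * P by field.
  lra.
set a := e * N.
have apos : 0 < a by rewrite /a; nra.
set S := a + 2 * E.
have Spos : 0 < S by rewrite /S; lra.
set s := 2 * E / S.
have hs : s * S = 2 * E by rewrite /s; field; lra.
have hs2 : (2 - s) * S = 2 * (a + E) by rewrite /s /S; field; lra.
have sr : 0 < s <= 1.
  split; first (rewrite /s; apply: Rdiv_lt_0_compat; lra).
  apply: (Rmult_le_reg_r S) => //; rewrite hs /S; lra.
have H1s := H1 s sr.
have step1 : 2 * E * S * P + E * S * S >= 4 * E * (a + E) * D2 / (2 * e).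
  have : s * P * (S * S) + E * (S * S) >= s * (2 - s) * D2 / (2 * e) * (S * S).
    have := Rmult_ge_compat_r (S * S) _ _ (Rle_ge _ _ (Rlt_le _ _ (Rmult_lt_0_compat _ _ Spos Spos))) H1s.
    lra.
  have -> : s * P * (S * S) = (s * S) * S * P by ring.
  have -> : s * (2 - s) * D2 / (2 * e) * (S * S) = (s * S) * ((2 - s) * S) * D2 / (2 * e) by field; lra.
  rewrite hs hs2; lra.
have step2 : 2 * S * P + S * S >= 2 * (a + E) * D2 / e.
  have : E * (2 * S * P + S * S) >= E * (2 * (a + E) * D2 / e).
    have -> : E * (2 * (a + E) * D2 / e) = 4 * E * (a + E) * D2 / (2 * e) by field; lra.
    lra.
  move=> h; apply: Rle_ge; apply: (Rmult_le_reg_l E) => //; lra.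
have step3 : 2 * a * S * P + a * S * S >= 2 * (a + E) * (N * D2).
  have := Rmult_ge_compat_l a _ _ (Rle_ge _ _ (Rlt_le _ _ apos)) step2.
  have -> : a * (2 * (a + E) * D2 / e) = 2 * (a + E) * (N * D2) by rewrite /a; field; lra.
  lra.
have key : (a + E) * (P * P) - a * S * P - a * S * S / 2 <= 0.
  have : (a + E) * (P * P) <= (a + E) * (N * D2) by apply: Rmult_le_compat_l; lra.
  lra.
set M := 3 / 2 * a + E.
have fM : (a + E) * (M * M) - a * S * M - a * S * S / 2 >= 0.
  have -> : (a + E) * (M * M) - a * S * M - a * S * S / 2 = (E - a / 2) * (E - a / 2) * (E + a)
    by rewrite /M /S; field.
  apply: Rle_ge; apply: Rmult_le_pos; [exact: (Rle_0_sqr (E - a / 2))|lra].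
have -> : 3 / 2 * e * N + E = M by rewrite /M /a; ring.
destruct (Rle_lt_dec P M) as [ok|bad] => //.
exfalso.
have Mpos : 0 <= M by rewrite /M; lra.
have diff : (a + E) * (P * P) - a * S * P - ((a + E) * (M * M) - a * S * M)
            = (P - M) * ((a + E) * (P + M) - a * S) by ring.
have pos2 : (a + E) * (P + M) - a * S > 0.
  have : (a + E) * (P + M) >= (a + E) * (2 * M) by apply: Rle_ge; apply: Rmult_le_compat_l; lra.
  rewrite /M /S; nra.
have : (P - M) * ((a + E) * (P + M) - a * S) > 0 by apply: Rmult_gt_0_compat; lra.
lra.
Qed.

Lemma pointwise_real eta eps r N D2 qa qc Pa Pc P :
  0 < eta -> 0 <= eps -> 0 < r <= 1 / 2 -> 0 <= N -> 0 <= D2 ->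
  (forall s, 0 <= s <= 1 -> qa <= s * qc + (1 - s) * qa - s * (1 - s) / (2 * eta) * D2 + eps) ->
  Pc <= r * Pa + (1 - r) * Pc - r * (1 - r) / (2 * eta) * D2 + r * r ->
  qa - qc = Pa - Pc - P ->
  (forall lam, 2 * lam * P <= D2 + lam * lam * N) ->
  P <= 3 / 2 * (eta / (1 - r)) * N + (eps + r).
Proof.
move=> he heps hr hN hD A B Rel CS.
have hK : D2 / (2 * eta) >= 0.
  apply: Rle_ge; apply: Rmult_le_pos; [exact: hD|apply: Rlt_le; apply: Rinv_0_lt_compat; lra].
set K := D2 / (2 * eta) in hK.
have eA : forall s, s * (1 - s) / (2 * eta) * D2 = s * (1 - s) * K.
  by move=> s; rewrite /K; field; lra.
have hX : Pa - Pc >= (1 - r) * K - r.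
  rewrite eA in B.
  have : r * (Pa - Pc) >= r * ((1 - r) * K - r) by lra.
  move=> h; apply: Rle_ge; apply: (Rmult_le_reg_l r); lra.
apply: core_real.
- apply: Rdiv_lt_0_compat; lra.
- lra.
- exact: hN.
- exact: hD.
- move=> s hs.
  have As := A s (conj (Rlt_le _ _ (proj1 hs)) (proj2 hs)).
  rewrite eA in As.
  have -> : s * (2 - s) * D2 / (2 * (eta / (1 - r))) = s * (2 - s) * (1 - r) * K.
    by rewrite /K; field; lra.
  have sX : s * (Pa - Pc) >= s * ((1 - r) * K - r).
    apply: Rmult_ge_compat_l => //; lra.
  have pos : s * (1 - s) * r * K >= 0.
    apply: Rle_ge; apply: Rmult_le_pos; last lra.
    apply: Rmult_le_pos; last lra. apply: Rmult_le_pos; lra.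
  have sr : s * r <= r by nra.
  nra.
- exact: CS.
Qed.

Lemma limit_real X a eps :
  0 <= a -> (forall r, 0 < r <= 1 / 2 -> X <= a / (1 - r) + eps + r) -> X <= a + eps.
Proof.
move=> ha h.
destruct (Rle_lt_dec X (a + eps)) as [ok|bad] => //.
exfalso.
set r := Rmin (1 / 2) ((X - a - eps) / (2 * (2 * a + 1))).
have rpos : 0 < r.
  apply: Rmin_glb_lt; first lra.
  apply: Rdiv_lt_0_compat; lra.
have rle : r <= 1 / 2 by apply: Rmin_l.
have rle2 : r <= (X - a - eps) / (2 * (2 * a + 1)) by apply: Rmin_r.
have := h r (conj rpos rle).
have : a / (1 - r) <= a + 2 * a * r.
  apply: (Rmult_le_reg_r (1 - r)); first lra.
  have -> : a / (1 - r) * (1 - r) = a by field; lra.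
  have := Rmult_le_pos (a * r) (1 - 2 * r) ltac:(nra) ltac:(lra); nra.
have : r * (2 * (2 * a + 1)) <= X - a - eps.
  have := Rmult_le_compat_r (2 * (2 * a + 1)) _ _ ltac:(lra) rle2.
  have -> : (X - a - eps) / (2 * (2 * a + 1)) * (2 * (2 * a + 1)) = X - a - eps by field; lra.
  done.
nra.
Qed.

End SPart5.

Section SPart6.
Local Open Scope R_scope.


Lemma near_min (T : Type) (dom : T -> Prop) (phi : T -> R) m delta :
  (exists x, dom x) -> (forall x, dom x -> m <= phi x) -> 0 < delta ->
  exists c, dom c /\ forall x, dom x -> phi c <= phi x + delta.
Proof.
move=> [x0 hx0] hb hd.
pose E := fun z => exists x, dom x /\ z = - phi x.
have bE : bound E.
  exists (- m) => z [x [hx ->]]; have := hb x hx; lra.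
have nE : exists z, E z by exists (- phi x0); exists x0.
have [l [hub hlub]] := completeness E bE nE.
apply: NNPP => hno.
have : is_upper_bound E (l - delta).
  move=> z [x [hx ->]].
  apply: Rnot_lt_le => hlt; apply: hno; exists x; split => // x' hx'.
  have := hub (- phi x') (ex_intro _ x' (conj hx' erefl)); lra.
move=> /hlub; lra.
Qed.

Lemma qform_inv_ge0 d (H Hinv : mat d) z :
  pos_def H -> is_inverse H Hinv -> 0 <= qform Hinv z.
Proof.
move=> hp hi.
have e : qform H (mv Hinv z) = qform Hinv z.
  by rewrite /qform (mv_inv _ hi) dot_comm.
rewrite -e; exact: qform_ge0.
Qed.

Lemma qform_swap d (H : mat d) x z : symmetric_mat H ->
  qform H (vsub x z) = qform H (vsub z x).
Proof.
move=> hs; rewrite !qform_sub // (@dot_mv_sym d H z x hs); ring.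
Qed.

Lemma Eb_ext n b (L : 'I_n -> R) (F G : batch n b -> R) :
  (forall B, F B = G B) -> Eb L F = Eb L G.
Proof. move=> e; rewrite /Eb; apply: rsum_ext => B; by rewrite e. Qed.

Lemma main_step d n b (H Hinv : mat d) (L : 'I_n -> R) (h : vec d -> R)
  (domh : vec d -> Prop) eta eps (y gy u0 : vec d) (V X : batch n b -> vec d) :
  symmetric_mat H -> pos_def H -> is_inverse H Hinv ->
  (forall i, 0 <= L i) -> 0 < Lavg L -> (0 < n)%N ->
  convex_ext h domh -> proper_ext domh -> 0 < eta -> 0 <= eps ->
  (forall B, eps_optimal H Hinv h domh eta y (V B) eps (X B)) ->
  (forall z, Eb L (fun B => dot (vsub (V B) gy) z) = 0) ->
  Eb L (fun B => dot (vsub (V B) gy) (vsub u0 (X B))) <=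
  3 * eta / 2 * Eb L (fun B => qform Hinv (vsub (V B) gy)) + eps.
Proof.
move=> Hsym Hpd Hinvh Lpos Lavgpos npos hconv hprop heta heps hopt hzero.
have hne : eta <> 0 by lra.
set Nb := Eb L (fun B => qform Hinv (vsub (V B) gy)).
have Nbpos : 0 <= Nb.
  rewrite -(Eb_const b Lavgpos npos 0); apply: (Eb_le Lpos Lavgpos npos) => B.
  exact: (qform_inv_ge0 _ Hpd Hinvh).
have -> : 3 * eta / 2 * Nb + eps = 3 / 2 * eta * Nb + eps by rewrite /Rdiv; ring.
apply: limit_real; first by apply: Rmult_le_pos => //; lra.
move=> r hr.
pose Phi := qsub H Hinv h eta y gy.
set kB := fun B => eta / 2 * (qform H (mv Hinv (V B)) - qform H (mv Hinv gy)).
have rel : forall B x, qsub H Hinv h eta y (V B) x =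
    Phi x + dot (vsub x y) (vsub (V B) gy) + kB B.
  move=> B x; rewrite /Phi /kB !(qsub_expand Hsym Hinvh) // dot_sub_r; ring.
have hb : forall x, domh x ->
    Eb L (fun B => qsub H Hinv h eta y (V B) (X B) - eps - kB B) <= Phi x.
  move=> x hx.
  have e1 : Eb L (fun B => qsub H Hinv h eta y (V B) x - kB B) = Phi x.
    transitivity (Eb L (fun B => (-1) * dot (vsub (V B) gy) (vsub x y) +
                                   (qsub H Hinv h eta y (V B) x - kB B))).
      by rewrite (Eb_lin L) hzero; ring.
    rewrite -(Eb_const b Lavgpos npos (Phi x)); apply: Eb_ext => B.
    rewrite rel dot_comm; ring.
  rewrite -e1; apply: (Eb_le Lpos Lavgpos npos) => B.
  have [_ o] := hopt B; have := o x hx; lra.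
have [c [hc copt]] := near_min hprop hb (Rmult_lt_0_compat r r (proj1 hr) (proj1 hr)).
rewrite /Phi in copt.
have pw : forall B, dot (vsub (V B) gy) (vsub c (X B)) <=
    3 / 2 * (eta / (1 - r)) * qform Hinv (vsub (V B) gy) + (eps + r).
  move=> B; have [hXB oB] := hopt B.
  apply: (pointwise_real eta eps r _ (qform H (vsub c (X B)))
     (qsub H Hinv h eta y (V B) (X B))
     (qsub H Hinv h eta y (V B) c) (qsub H Hinv h eta y gy (X B))
     (qsub H Hinv h eta y gy c)).
  - exact: heta.
  - exact: heps.
  - exact: hr.
  - exact: (qform_inv_ge0 _ Hpd Hinvh).
  - exact: qform_ge0.
  - move=> s hs.
    have [hm hle] := qsub_strong Hsym Hinvh y (V B) heta hconv hc hXB hs.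
    have := oB _ hm; lra.
  - have hr1 : 0 <= r <= 1 by lra.
    have [hm hle] := qsub_strong Hsym Hinvh y gy heta hconv hXB hc hr1.
    rewrite (qform_swap _ _ Hsym) in hle.
    have := copt _ hm; lra.
  - rewrite !rel !(dot_sub_l, dot_sub_r) ?(dot_comm (V B) c) ?(dot_comm (V B) (X B)) ?(dot_comm gy c) ?(dot_comm gy (X B)) ?(dot_comm (V B) y) ?(dot_comm gy y); rewrite /Phi; ring.
  - exact: (cauchy_schwarz Hsym Hpd Hinvh (vsub c (X B)) (vsub (V B) gy)).
have e2 : Eb L (fun B => dot (vsub (V B) gy) (vsub u0 (X B))) =
          1 * Eb L (fun B => dot (vsub (V B) gy) (vsub c (X B))) + 0.
  rewrite -(hzero (vsub u0 c)) -(Eb_lin L); apply: Eb_ext => B.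
  rewrite !dot_sub_r; ring.
rewrite e2.
have := Eb_le Lpos Lavgpos npos pw.
rewrite (Eb_lin L (3 / 2 * (eta / (1 - r)))) (Eb_const b Lavgpos npos) -/Nb.
have -> : 3 / 2 * eta * Nb / (1 - r) = 3 / 2 * (eta / (1 - r)) * Nb by field; lra.
lra.
Qed.

End SPart6.

Unset Implicit Arguments.

Lemma fst_state d n b (eta tau mu : R) (g : 'I_n -> vec d -> vec d)
  (L : 'I_n -> R) (xt : vec d) (S : seq (batch n b) -> vec d) B hs :
  fst (state eta tau mu g L xt S (B :: hs)) = S (B :: hs).
Proof. by rewrite /=; case: (state eta tau mu g L xt S hs). Qed.

Theorem lemma5 (d n b : nat) (H Hinv : mat d)
  (f : 'I_n -> vec d -> R) (g : 'I_n -> vec d -> vec d) (L : 'I_n -> R) (mu : R)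
  (h : vec d -> R) (domh : vec d -> Prop)
  (eta tau : R) (T k : nat) (eps : nat -> R) (xt : vec d)
  (sol : seq (batch n b) -> vec d) (u : seq (batch n b) -> vec d) :
  (0 < n)%N -> (0 < b)%N ->
  symmetric_mat H -> pos_def H -> is_inverse H Hinv ->
  (forall i, has_gradient (f i) (g i)) ->
  (forall i, convex_fun (f i)) ->
  (* Assumption 1 *)
  (forall i, (0 <= L i)%R) -> (0 < Lavg L)%R ->
  (forall i x y, (anorm Hinv (vsub (g i x) (g i y)) <= L i * anorm H (vsub x y))%R) ->
  (* Assumption 2 *)
  (0 < mu)%R ->
  (forall x y, (favg f y >= favg f x + dot (gavg g x) (vsub y x)
                               + mu / 2 * qform H (vsub y x))%R) ->
  (* h proper, convex, lsc, with closed domain *)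
  proper_ext domh -> convex_ext h domh -> lsc_ext h domh -> closed_vset domh ->
  (* parameters of Algorithm 2 *)
  (0 < eta <= / Lavg L)%R -> (0 < tau < 1)%R ->
  (forall j, (0 <= eps j)%R) -> (k < T)%N ->
  (* x_{j+1} = sol [:: B_j; ...; B_0] is an eps_j-optimal solution of the j-th subproblem *)
  (forall hs : seq (batch n b), (1 <= size hs <= T)%N ->
     eps_optimal H Hinv h domh eta
       (ystep eta tau mu g L xt sol (behead hs)) (vstep eta tau mu g L xt sol hs)
       (eps (size hs).-1) (sol hs)) ->
  (* u_k is determined by B_0..B_{k-1}: u_k = u [:: B_{k-1}; ...; B_0] *)
  (Ehist L k.+1 (fun hs => dot (delta_step eta tau mu g L xt sol hs)
                             (vsub (u (behead hs)) (fst (state eta tau mu g L xt sol hs))))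
   <= 3 * eta / 2 * Ehist L k.+1 (fun hs => qform Hinv (delta_step eta tau mu g L xt sol hs))
      + eps k)%R.
Proof.
move=> npos bpos Hsym Hpd Hinvh _ _ Lpos Lavgpos Lip _ _ hprop hconv _ _ [etapos _] _
  epspos kT hopt.
have eE : forall F, Ehist L k.+1 F = Ehist L k (fun hs => Eb L (fun B => F (B :: hs))) by [].
rewrite !eE -(Ehist_lin Lavgpos npos).
apply: (Ehist_le Lpos Lavgpos npos) => hs hsz.
set y := ystep eta tau mu g L xt sol hs.
have -> : Eb L (fun B => dot (delta_step eta tau mu g L xt sol (B :: hs))
      (vsub (u (behead (B :: hs))) (fst (state eta tau mu g L xt sol (B :: hs))))) =
   Eb L (fun B => dot (vsub (vest g L xt y B) (gavg g y)) (vsub (u hs) (sol (B :: hs)))).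
  by apply: Eb_ext => B; rewrite fst_state.
apply: (@main_step _ _ _ H Hinv L h domh eta (eps k) y (gavg g y) (u hs) (fun B => vest g L xt y B) (fun B => sol (B :: hs))) => //.
- move=> B; have := hopt (B :: hs); rewrite /= hsz; apply; exact: kT.
- exact: (delta_zero_mean Hpd Hinvh Lavgpos npos bpos Lip).
Qed.
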